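(* Let $n\ge p$, $\alpha\neq-1$, $U,\widetilde U\in St(n,p)$, and let $Q\widehat N=(I_n-UU^T)\widetilde U$ be a compact QR-decomposition with $Q\in St(n,p)$, $\widehat N\in\mathbb{R}^{p\times p}$. Consider the following shooting iteration with threshold $\epsilon>0$ and time steps $0=t_0<t_1<\dots<t_m=1$: set $\gamma\leftarrow\|\widetilde U-U\|$ and $\Delta\leftarrow\gamma\,\Pi_U(\widetilde U)/\|\Pi_U(\widetilde U)\|$; while $\gamma>\epsilon$: set $\widetilde U^s(j)\leftarrow\operatorname{Exp}^\alpha_U(t_j\Delta)$ for $j=0,\dots,m$; set $\Delta^s\leftarrow\widetilde U^s(m)-\widetilde U$ and $\gamma\leftarrow\|\Delta^s\|$; for $j=m,m-1,\dots,0$ set $\Delta^s\leftarrow\gamma\,\Pi_{\widetilde U^s(j)}(\Delta^s)/\|\Pi_{\widetilde U^s(j)}(\Delta^s)\|$; then update $\Delta\leftarrow\Delta-\Delta^s$. Then every iterate $\Delta$ produced by this iteration, and every matrix $\Delta^s$ obtained at the end of one pass through the while-loop, has a representation \[ \Delta=UA+QR,\qquad \Delta^s=UA^s+QR^s,\qquad A,A^s\in\operatorname{Skew}(p),\ R,R^s\in\mathbb{R}^{p\times p}, \] with the same matrix $Q$ for all iterates.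
   Context: $St(n,p)=\{U\in\mathbb{R}^{n\times p}: U^TU=I_p\}$; $\operatorname{Skew}(p)$ is the set of real skew-symmetric $p\times p$ matrices; $\|\cdot\|$ is the Frobenius norm. For $W\in\mathbb{R}^{n\times p}$ and $Y\in St(n,p)$, $\Pi_Y(W)=W-Y\operatorname{sym}(Y^TW)$ with $\operatorname{sym}(X)=\frac12(X+X^T)$ (orthogonal projection onto $T_YSt(n,p)=\{\Delta: Y^T\Delta\in\operatorname{Skew}(p)\}$). The $\alpha$-metric is $\langle\Delta,\widetilde\Delta\rangle^\alpha_U=\operatorname{tr}\big(\Delta^T(I_n-\frac{2\alpha+1}{2(\alpha+1)}UU^T)\widetilde\Delta\big)$ and $\operatorname{Exp}^\alpha_U(\Delta)$ is the endpoint at time $1$ of its geodesic starting at $U$ with initial velocity $\Delta$ (so $\operatorname{Exp}^\alpha_U(0)=U$). *)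

(* Defs.v *)
From HB Require Import structures.
From mathcomp Require Import all_boot all_order all_algebra.
From mathcomp Require Import all_classical all_reals all_analysis.

Set Implicit Arguments.
Unset Strict Implicit.
Unset Printing Implicit Defensive.

Import Order.TTheory GRing.Theory Num.Theory.
Import numFieldNormedType.Exports.
Local Open Scope ring_scope.
Local Open Scope classical_set_scope.

Section Stiefel.
Variable R : realType.
Variables n p : nat.

Definition frob_inner (X Y : 'M[R]_(n, p)) : R := \tr (X^T *m Y).
Definition frob (X : 'M[R]_(n, p)) : R := Num.sqrt (frob_inner X X).

Definition stiefel (U : 'M[R]_(n, p)) : Prop := U^T *m U = 1%:M.

Definition skew_mat (A : 'M[R]_p) : Prop := A^T = - A.

Definition symm (X : 'M[R]_p) : 'M[R]_p := 2^-1 *: (X + X^T).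

Definition proj_tan (Y W : 'M[R]_(n, p)) : 'M[R]_(n, p) :=
  W - Y *m symm (Y^T *m W).

Definition tangent (Y D : 'M[R]_(n, p)) : Prop := skew_mat (Y^T *m D).

Definition alpha_coef (alpha : R) : R := (2 * alpha + 1) / (2 * (alpha + 1)).

Definition alpha_metric (alpha : R) (U D D' : 'M[R]_(n, p)) : R :=
  \tr (D^T *m ((1%:M - alpha_coef alpha *: (U *m U^T)) *m D')).

(* Geodesics of the alpha-metric: twice differentiable curves g in St(n,p)
   that are critical points of the energy
     E(g) = 1/2 \int <g', g'>^alpha_g
           = 1/2 \int ( |g'|^2 - c |g^T g'|^2 ),   c = alpha_coef alpha,
   i.e. (Euler-Lagrange equations with the constraint g in St(n,p)) the
   ambient Euler-Lagrange expression
     d/dt (g' - c g g^T g') + c g' g'^T g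
   is Frobenius-orthogonal to the tangent space T_{g(t)} St(n,p). *)
Definition alpha_geodesic (alpha : R) (g : R -> 'M[R]_(n, p)) : Prop :=
  (forall t, stiefel (g t)) /\
  (forall t, derivable g t 1) /\
  (forall t, derivable (derive1 g) t 1) /\
  (forall t (H : 'M[R]_(n, p)), tangent (g t) H ->
     frob_inner
       (derive1 (fun s => derive1 g s
                   - alpha_coef alpha *: (g s *m (g s)^T *m derive1 g s)) t
        + alpha_coef alpha *: (derive1 g t *m (derive1 g t)^T *m g t)) H = 0).

(* Exp^alpha_U(D): endpoint at time 1 of the alpha-geodesic starting at U
   with initial velocity D (junk value 0 if no such geodesic exists). *)
Definition alpha_Exp (alpha : R) (U D : 'M[R]_(n, p)) : 'M[R]_(n, p) :=
  (xget (fun _ => 0)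
     [set g | alpha_geodesic alpha g /\ g 0 = U /\ derive1 g 0 = D]) 1.

Definition rescaled_proj (gamma : R) (Y W : 'M[R]_(n, p)) : 'M[R]_(n, p) :=
  (gamma / frob (proj_tan Y W)) *: proj_tan Y W.

(* backward loop "for j = m, m-1, ..., 0": applies the projections
   at Us(j) for j = k-1, ..., 0 (called with k = m+1). *)
Fixpoint backward (gamma : R) (Us : nat -> 'M[R]_(n, p)) (k : nat)
    (Ds : 'M[R]_(n, p)) : 'M[R]_(n, p) :=
  match k with
  | 0%N => Ds
  | k'.+1 => backward gamma Us k' (rescaled_proj gamma (Us k') Ds)
  end.

Definition shooting_body (alpha : R) (U Ut : 'M[R]_(n, p)) (m : nat)
    (t : nat -> R) (D : 'M[R]_(n, p)) :
    'M[R]_(n, p) * R * 'M[R]_(n, p) :=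
  let Us := fun j => alpha_Exp alpha U (t j *: D) in
  let Ds0 := Us m - Ut in
  let gamma := frob Ds0 in
  let Ds := backward gamma Us m.+1 Ds0 in
  (Ds, gamma, D - Ds).

Definition shooting_init (U Ut : 'M[R]_(n, p)) : 'M[R]_(n, p) * R :=
  let gamma := frob (Ut - U) in
  (rescaled_proj gamma U Ut, gamma).

Fixpoint shooting_state (alpha : R) (U Ut : 'M[R]_(n, p)) (m : nat)
    (t : nat -> R) (k : nat) : 'M[R]_(n, p) * R :=
  match k with
  | 0%N => shooting_init U Ut
  | k'.+1 =>
      let r := shooting_body alpha U Ut m t (shooting_state alpha U Ut m t k').1 in
      (r.2, r.1.2)
  end.

End Stiefel.

(* Main.v *)
Require Import Defs.
From HB Require Import structures.
From mathcomp Require Import all_boot all_order all_algebra.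
From mathcomp Require Import all_classical all_reals all_analysis.
From mathcomp Require Import lra ring.

Import Order.TTheory GRing.Theory Num.Theory.
Local Open Scope ring_scope.
Module HA.
Set Implicit Arguments.
Unset Strict Implicit.
Unset Printing Implicit Defensive.
Import numFieldNormedType.Exports.
Local Open Scope ring_scope.

Section Calc.
Variable R : realType.

Definition MD {a b : nat} (F : R -> 'M[R]_(a,b)) (t : R) (D : 'M[R]_(a,b)) :=
  forall i j, is_derive t (1:R) (fun s => F s i j) (D i j).

Lemma exd (x : R) (f : R -> R) df (H : is_derive x (1:R) f df) : derivable f x 1.
Proof. exact: (@ex_derive _ _ _ _ _ _ _ H). Qed.
Lemma dval (x : R) (f : R -> R) df (H : is_derive x (1:R) f df) : 'D_1 f x = df.
Proof. exact: (@derive_val _ _ _ _ _ _ _ H). Qed.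

Lemma is_derive_ext (f g : R -> R) t d :
  (forall s, f s = g s) -> is_derive t (1:R) g d -> is_derive t (1:R) f d.
Proof. by move=> fg; have -> : f = g by apply/funext. Qed.

Lemma MD_derivable a b (F : R -> 'M[R]_(a,b)) t D : MD F t D -> derivable F t 1.
Proof. by move=> H; apply/derivable_mxP => i j; case: (H i j). Qed.

Lemma MD_derive1 a b (F : R -> 'M[R]_(a,b)) t D : MD F t D -> derive1 F t = D.
Proof.
move=> H; rewrite derive1E derive_mx; last exact: MD_derivable H.
by apply/matrixP => i j; rewrite mxE; case: (H i j).
Qed.

Lemma derivable_MD a b (F : R -> 'M[R]_(a,b)) t :
  derivable F t 1 -> MD F t (derive1 F t).
Proof.
move=> dF i j; have := (derivable_mxP _ _ _).1 dF i j.
rewrite derive1E derive_mx // mxE; exact: derivableP.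
Qed.

Lemma MD_cst a b (C : 'M[R]_(a,b)) t : MD (fun _ => C) t 0.
Proof.
move=> i j; rewrite mxE; apply: (@is_derive_ext _ (cst (C i j))) => //.
Qed.

Lemma MD_add a b (F G : R -> 'M[R]_(a,b)) t F' G' :
  MD F t F' -> MD G t G' -> MD (fun s => F s + G s) t (F' + G').
Proof.
move=> HF HG i j; rewrite mxE.
apply: (@is_derive_ext _ ((fun s => F s i j) + (fun s => G s i j))).
  by move=> s; rewrite !mxE.
exact: is_deriveD.
Qed.

Lemma MD_scale a b (F : R -> 'M[R]_(a,b)) t F' k :
  MD F t F' -> MD (fun s => k *: F s) t (k *: F').
Proof.
move=> HF i j; rewrite mxE.
apply: (@is_derive_ext _ (k *: (fun s => F s i j))).
  by move=> s; rewrite !mxE.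
exact: is_deriveZ.
Qed.

Lemma MD_opp a b (F : R -> 'M[R]_(a,b)) t F' :
  MD F t F' -> MD (fun s => - F s) t (- F').
Proof.
move=> HF; have := MD_scale (-1) HF.
by rewrite scaleN1r; under eq_fun do rewrite scaleN1r.
Qed.

Lemma MD_sub a b (F G : R -> 'M[R]_(a,b)) t F' G' :
  MD F t F' -> MD G t G' -> MD (fun s => F s - G s) t (F' - G').
Proof.
move=> HF HG i j; rewrite !mxE.
apply: (@is_derive_ext _ ((fun s => F s i j) - (fun s => G s i j))).
  by move=> s; rewrite !mxE.
exact: is_deriveB.
Qed.

Lemma MD_tr a b (F : R -> 'M[R]_(a,b)) t F' :
  MD F t F' -> MD (fun s => (F s)^T) t F'^T.
Proof.
move=> HF i j; rewrite mxE.
by apply: (@is_derive_ext _ (fun s => F s j i)) => // s; rewrite mxE.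
Qed.

Lemma MD_mul a b c (F : R -> 'M[R]_(a,b)) (G : R -> 'M[R]_(b,c)) t F' G' :
  MD F t F' -> MD G t G' -> MD (fun s => F s *m G s) t (F' *m G t + F t *m G').
Proof.
move=> HF HG i j.
apply: (@is_derive_ext _ (\sum_(k < b) ((fun s => F s i k) * (fun s => G s k j)))).
  by move=> s; rewrite fct_sumE mxE.
apply: is_derive_eq; first by apply: is_derive_sum => k; exact: is_deriveM.
rewrite !mxE -big_split /=; apply: eq_bigr => k _.
by rewrite /= addrC [G t k j *: _]mulrC.
Qed.

Lemma MD_mull a b c (L : 'M[R]_(a,b)) (F : R -> 'M[R]_(b,c)) t F' :
  MD F t F' -> MD (fun s => L *m F s) t (L *m F').
Proof.
move=> HF; have := MD_mul (MD_cst L t) HF.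
by rewrite mul0mx add0r.
Qed.

Lemma MD_const0 a b (F : R -> 'M[R]_(a,b)) C t D :
  (forall s, F s = C) -> MD F t D -> D = 0.
Proof.
move=> FC H; have EF : F = fun _ => C by apply/funext.
rewrite -(MD_derive1 H) EF; exact: MD_derive1 (MD_cst C t).
Qed.

Lemma trB a b (A B : 'M[R]_(a,b)) : (A - B)^T = A^T - B^T.
Proof. by apply/matrixP => i j; rewrite !mxE. Qed.
Lemma trD a b (A B : 'M[R]_(a,b)) : (A + B)^T = A^T + B^T.
Proof. by apply/matrixP => i j; rewrite !mxE. Qed.
Lemma trN a b (A : 'M[R]_(a,b)) : (- A)^T = - A^T.
Proof. by apply/matrixP => i j; rewrite !mxE. Qed.
Lemma trZ a b k (A : 'M[R]_(a,b)) : (k *: A)^T = k *: A^T.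
Proof. by apply/matrixP => i j; rewrite !mxE. Qed.

End Calc.

End HA.
Import HA.

Module HB.
Set Implicit Arguments.
Unset Strict Implicit.
Unset Printing Implicit Defensive.
Import numFieldNormedType.Exports.
Local Open Scope ring_scope.
Local Open Scope classical_set_scope.

Section Gron.
Variable R : realType.
Variables n p : nat.
Notation fi := (@frob_inner R n p).

Lemma fiE (X Y : 'M[R]_(n,p)) : fi X Y = \sum_i \sum_j X i j * Y i j.
Proof.
rewrite /frob_inner /mxtrace exchange_big /=; apply: eq_bigr => j _.
by rewrite mxE; apply: eq_bigr => i _; rewrite mxE.
Qed.

Lemma fi_ge0 X : 0 <= fi X X.
Proof. by rewrite fiE; apply: sumr_ge0 => i _; apply: sumr_ge0 => j _; exact: sqr_ge0. Qed.

Lemma fi_eq0 X : fi X X = 0 -> X = 0.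
Proof.
rewrite fiE => H; apply/matrixP => i j; rewrite mxE.
have H1 := psumr_eq0P (fun i _ => sumr_ge0 _ (fun j _ => sqr_ge0 (X i j))) H.
have H2 := psumr_eq0P (fun j _ => sqr_ge0 (X i j)) (H1 i isT).
by have /eqP := H2 j isT; rewrite mulf_eq0 orbb => /eqP.
Qed.

Lemma fiC X Y : fi X Y = fi Y X.
Proof. by rewrite !fiE; apply: eq_bigr => i _; apply: eq_bigr => j _; rewrite mulrC. Qed.

Lemma is_derive_fi (h : R -> 'M[R]_(n,p)) t h' :
  MD h t h' -> is_derive t (1:R) (fun s => fi (h s) (h s)) (2 * fi (h t) h').
Proof.
move=> H; have M := MD_mul (MD_tr H) H.
apply: (@is_derive_ext _ _ (\sum_(i < p) (fun s => ((h s)^T *m h s) i i))).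
  by move=> s; rewrite fct_sumE.
apply: is_derive_eq; first by apply: is_derive_sum => i; exact: M.
rewrite -/(mxtrace _) mxtraceD -[X in X + _]mxtrace_tr trmx_mul trmxK.
by rewrite -/(fi _ _) mulr2n -mulr2n mulr_natl.
Qed.

Lemma gronwall (h v h' v' : R -> 'M[R]_(n,p)) K :
  (forall s, MD h s (h' s)) -> (forall s, MD v s (v' s)) -> 0 <= K ->
  (forall s, 0 <= s <= 1 ->
     fi (h s) (h' s) + fi (v s) (v' s) <= K * (fi (h s) (h s) + fi (v s) (v s))) ->
  h 0 = 0 -> v 0 = 0 -> h 1 = 0.
Proof.
move=> Hh Hv K0 Hb h0 v0.
pose phi s := fi (h s) (h s) + fi (v s) (v s).
have dphi s : is_derive s (1:R) phi (2 * fi (h s) (h' s) + 2 * fi (v s) (v' s)).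
  exact: is_deriveD (is_derive_fi (Hh s)) (is_derive_fi (Hv s)).
pose e s := expR (- (2 * K) * s).
have de s : is_derive s (1:R) e (expR (- (2 * K) * s) * (- (2 * K))).
  have dl : is_derive s (1:R) (fun s => - (2 * K) * s) (- (2 * K)).
    apply: (@is_derive_ext _ _ ((- (2 * K)) *: id)) => //.
    have H := is_deriveZ (- (2 * K)) (is_derive_id s (1:R)).
    by rewrite /GRing.scale /= mulr1 in H.
  exact: (@is_derive1_comp _ expR (fun s => - (2 * K) * s)).
pose psi := e * phi.
have dpsi s : is_derive s (1:R) psi (e s * (2 * fi (h s) (h' s) + 2 * fi (v s) (v' s))
        + phi s * (expR (- (2 * K) * s) * (- (2 * K)))).
  exact: (is_deriveM (de s) (dphi s)).
have cpsi : {within `[0, 1], continuous psi}.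
  apply: continuous_subspaceT => s.
  apply/differentiable_continuous/derivable1_diffP; exact: exd (dpsi s).
have Hle := @ler0_derive1_nincr R psi 0 1 (fun s _ => exd (dpsi s)) _ cpsi 0 1 (lexx _) ler01 (lexx _).
have : psi 1 <= 0.
  apply: le_trans (Hle _) _.
    move=> s; rewrite in_itv /= => /andP [s0 s1].
    rewrite derive1E (dval (dpsi s)) /e mulrCA -mulrDr pmulr_rle0 ?expR_gt0 //.
    have := Hb s; rewrite (ltW s0) (ltW s1) -/(phi s) => /(_ isT); lra.
  have -> : psi 0 = e 0 * phi 0 by [].
  by rewrite /phi h0 v0 /frob_inner !mulmx0 mxtrace0 addr0 mulr0.
have -> : psi 1 = e 1 * phi 1 by [].
rewrite pmulr_rle0 ?expR_gt0 // => H.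
have H1 : fi (h 1) (h 1) = 0.
  apply/eqP; rewrite eq_le fi_ge0 andbT.
  by apply: le_trans H; rewrite lerDl fi_ge0.
exact: fi_eq0.
Qed.

End Gron.

End HB.
Import HB.

Module HC.
Set Implicit Arguments.
Unset Strict Implicit.
Unset Printing Implicit Defensive.
Import numFieldNormedType.Exports.
Local Open Scope ring_scope.

Section Bounds.
Variable R : realType.

Definition sabs {a b} (Y : 'M[R]_(a,b)) : R := \sum_i \sum_j `|Y i j|.
Definition bnd {a b} (x : R) (M : 'M[R]_(a,b)) := 0 <= x /\ forall i j, `|M i j| <= x.

Lemma sabs_ge0 a b (Y : 'M[R]_(a,b)) : 0 <= sabs Y.
Proof. by apply: sumr_ge0 => i _; apply: sumr_ge0 => j _. Qed.

Lemma le_sabs a b (Y : 'M[R]_(a,b)) i j : `|Y i j| <= sabs Y.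
Proof.
rewrite /sabs (bigD1 i) //= (bigD1 j) //= -addrA lerDl.
apply: addr_ge0; first by apply: sumr_ge0.
by apply: sumr_ge0 => i' _; apply: sumr_ge0.
Qed.

Lemma bnd_mul a b c (A : 'M[R]_(a,b)) (B : 'M[R]_(b,c)) x y :
  bnd x A -> bnd y B -> bnd (x * y * b%:R) (A *m B).
Proof.
move=> [x0 HA] [y0 HB]; split; first by rewrite !mulr_ge0.
move=> i j; rewrite mxE; apply: le_trans (ler_norm_sum _ _ _) _.
rewrite mulr_natr -[X in _ *+ X]card_ord -sumr_const; apply: ler_sum => k _.
by rewrite normrM ler_pM.
Qed.

Lemma bnd_tr a b (A : 'M[R]_(a,b)) x : bnd x A -> bnd x A^T.
Proof. by move=> [x0 H]; split => // i j; rewrite mxE. Qed.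

Lemma bnd_add a b (A B : 'M[R]_(a,b)) x y : bnd x A -> bnd y B -> bnd (x + y) (A + B).
Proof.
move=> [x0 HA] [y0 HB]; split; first by rewrite addr_ge0.
by move=> i j; rewrite mxE; apply: le_trans (ler_normD _ _) _; rewrite lerD.
Qed.

Lemma bnd_scale a b (A : 'M[R]_(a,b)) x k : bnd x A -> bnd (`|k| * x) (k *: A).
Proof.
move=> [x0 HA]; split; first by rewrite mulr_ge0.
by move=> i j; rewrite mxE normrM ler_wpM2l.
Qed.

Lemma bnd_opp a b (A : 'M[R]_(a,b)) x : bnd x A -> bnd x (- A).
Proof. by move=> [x0 HA]; split => // i j; rewrite mxE normrN. Qed.

Lemma bnd_1 a : bnd 1 (1%:M : 'M[R]_a).
Proof.
split=> // i j; rewrite mxE; case: (i == j) => /=; by rewrite ?normr1 ?normr0.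
Qed.

Lemma bnd_le a b (A : 'M[R]_(a,b)) x y : bnd x A -> x <= y -> bnd y A.
Proof. move=> [x0 H] xy; split; [exact: le_trans xy | by move=> i j; apply: le_trans xy]. Qed.

Variables n p : nat.
Notation fi := (@frob_inner R n p).

Definition dom {a b} (be : R) (Z : 'M[R]_(a,b)) (Y1 Y2 : 'M[R]_(n,p)) :=
  0 <= be /\ forall i j, `|Z i j| <= be * (sabs Y1 + sabs Y2).

Lemma dom_Y1 (Y1 Y2 : 'M[R]_(n,p)) : dom 1 Y1 Y1 Y2.
Proof.
split=> // i j; rewrite mul1r; apply: le_trans (le_sabs _ i j) _.
by rewrite lerDl sabs_ge0.
Qed.

Lemma dom_Y2 (Y1 Y2 : 'M[R]_(n,p)) : dom 1 Y2 Y1 Y2.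
Proof.
split=> // i j; rewrite mul1r; apply: le_trans (le_sabs _ i j) _.
by rewrite lerDr sabs_ge0.
Qed.

Lemma dom_add a b (Z1 Z2 : 'M[R]_(a,b)) Y1 Y2 x y :
  dom x Z1 Y1 Y2 -> dom y Z2 Y1 Y2 -> dom (x + y) (Z1 + Z2) Y1 Y2.
Proof.
move=> [x0 H1] [y0 H2]; split; first by rewrite addr_ge0.
by move=> i j; rewrite mxE mulrDl; apply: le_trans (ler_normD _ _) _; rewrite lerD.
Qed.

Lemma dom_scale a b (Z : 'M[R]_(a,b)) Y1 Y2 x k :
  dom x Z Y1 Y2 -> dom (`|k| * x) (k *: Z) Y1 Y2.
Proof.
move=> [x0 H]; split; first by rewrite mulr_ge0.
by move=> i j; rewrite mxE normrM -mulrA ler_wpM2l.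
Qed.

Lemma dom_opp a b (Z : 'M[R]_(a,b)) Y1 Y2 x :
  dom x Z Y1 Y2 -> dom x (- Z) Y1 Y2.
Proof. by move=> [x0 H]; split => // i j; rewrite mxE normrN. Qed.

Lemma dom_le a b (Z : 'M[R]_(a,b)) Y1 Y2 x y :
  dom x Z Y1 Y2 -> x <= y -> dom y Z Y1 Y2.
Proof.
move=> [x0 H] xy; split; first exact: le_trans xy.
move=> i j; apply: le_trans (H i j) _; apply: ler_wpM2r => //.
by rewrite addr_ge0 ?sabs_ge0.
Qed.

Lemma dom_mull a b c (L : 'M[R]_(a,b)) (Z : 'M[R]_(b,c)) Y1 Y2 x y :
  bnd x L -> dom y Z Y1 Y2 -> dom (x * y * b%:R) (L *m Z) Y1 Y2.
Proof.
move=> [x0 HL] [y0 HZ]; split; first by rewrite !mulr_ge0.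
move=> i j; rewrite mxE; apply: le_trans (ler_norm_sum _ _ _) _.
rewrite mulrAC mulr_natr -[X in _ *+ X]card_ord -sumr_const; apply: ler_sum => k _.
by rewrite normrM -mulrA ler_pM.
Qed.

Lemma dom_mulr a b c (Z : 'M[R]_(a,b)) (L : 'M[R]_(b,c)) Y1 Y2 x y :
  bnd x L -> dom y Z Y1 Y2 -> dom (x * y * b%:R) (Z *m L) Y1 Y2.
Proof.
move=> [x0 HL] [y0 HZ]; split; first by rewrite !mulr_ge0.
move=> i j; rewrite mxE; apply: le_trans (ler_norm_sum _ _ _) _.
rewrite mulrAC mulr_natr -[X in _ *+ X]card_ord -sumr_const; apply: ler_sum => k _.
by rewrite normrM mulrC -mulrA ler_pM.
Qed.

Lemma sabs_mul (X Y : 'M[R]_(n,p)) :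
  sabs X * sabs Y <= (n * p)%:R * (fi X X + fi Y Y).
Proof.
rewrite /sabs !fiE !pair_bigA /= mulr_suml.
have -> : (n * p)%:R = #|{: 'I_n * 'I_p}|%:R :> R by rewrite card_prod !card_ord.
set N := #|_|.
apply: (@le_trans _ _ (\sum_x \sum_(y : 'I_n * 'I_p) (X x.1 x.2 * X x.1 x.2 + Y y.1 y.2 * Y y.1 y.2))).
  apply: ler_sum => x _; rewrite mulr_sumr; apply: ler_sum => y _.
  have := sqr_ge0 (`|X x.1 x.2| - `|Y y.1 y.2|).
  have := normr_ge0 (X x.1 x.2); have := normr_ge0 (Y y.1 y.2).
  rewrite -[X x.1 x.2 * _]real_normK ?num_real // -[Y y.1 y.2 * _]real_normK ?num_real //.
  nra.
rewrite (eq_bigr (fun x => X x.1 x.2 * X x.1 x.2 *+ N + \sum_(y : 'I_n * 'I_p) Y y.1 y.2 * Y y.1 y.2)); last first.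
  by move=> x _; rewrite big_split sumr_const.
by rewrite big_split sumr_const /= sumrMnl mulrDr !mulr_natl.
Qed.

Lemma fi_dom (X Z Y1 Y2 : 'M[R]_(n,p)) be :
  dom be Z Y1 Y2 -> fi X Z <= be * (n * p)%:R * (2 * fi X X + fi Y1 Y1 + fi Y2 Y2).
Proof.
move=> [b0 H].
have -> : fi X Z = \sum_i \sum_j X i j * Z i j by rewrite fiE.
apply: le_trans (_ : \sum_i \sum_j `|X i j| * (be * (sabs Y1 + sabs Y2)) <= _).
  apply: ler_sum => i _; apply: ler_sum => j _.
  apply: le_trans (ler_norm _) _; rewrite normrM; apply: ler_wpM2l => //.
under eq_bigr do rewrite -mulr_suml.
rewrite -mulr_suml -/(sabs X) mulrCA mulrDr.
have h1 := sabs_mul X Y1; have h2 := sabs_mul X Y2.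
have := fi_ge0 X; have := fi_ge0 Y1; have := fi_ge0 Y2.
rewrite -mulrA => g2 g1 g0; apply: ler_wpM2l => //.
apply: le_trans (lerD h1 h2) _.
rewrite -mulrDr; apply: ler_wpM2l => //.
lra.
Qed.

Definition Bd {a b} (F : R -> 'M[R]_(a,b)) :=
  exists x, forall s, 0 <= s <= 1 -> bnd x (F s).
Definition Dom {a b} (Z : R -> 'M[R]_(a,b)) (h v : R -> 'M[R]_(n,p)) :=
  exists be, forall s, 0 <= s <= 1 -> dom be (Z s) (h s) (v s).

Lemma Bd_mul a b c (A : R -> 'M[R]_(a,b)) (B : R -> 'M[R]_(b,c)) :
  Bd A -> Bd B -> Bd (fun s => A s *m B s).
Proof. by move=> [x HA] [y HB]; exists (x * y * b%:R) => s Hs; apply: bnd_mul; auto. Qed.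
Lemma Bd_add a b (A B : R -> 'M[R]_(a,b)) : Bd A -> Bd B -> Bd (fun s => A s + B s).
Proof. by move=> [x HA] [y HB]; exists (x + y) => s Hs; apply: bnd_add; auto. Qed.
Lemma Bd_opp a b (A : R -> 'M[R]_(a,b)) : Bd A -> Bd (fun s => - A s).
Proof. by move=> [x HA]; exists x => s Hs; apply: bnd_opp; auto. Qed.
Lemma Bd_scale a b (A : R -> 'M[R]_(a,b)) k : Bd A -> Bd (fun s => k *: A s).
Proof. by move=> [x HA]; exists (`|k| * x) => s Hs; apply: bnd_scale; auto. Qed.
Lemma Bd_tr a b (A : R -> 'M[R]_(a,b)) : Bd A -> Bd (fun s => (A s)^T).
Proof. by move=> [x HA]; exists x => s Hs; apply: bnd_tr; auto. Qed.
Lemma Bd_ext a b (A B : R -> 'M[R]_(a,b)) : (forall s, A s = B s) -> Bd B -> Bd A.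
Proof. by move=> E [x HB]; exists x => s Hs; rewrite E; auto. Qed.

Lemma Dom_Y1 (h v : R -> 'M[R]_(n,p)) : Dom h h v.
Proof. by exists 1 => s _; exact: dom_Y1. Qed.
Lemma Dom_Y2 (h v : R -> 'M[R]_(n,p)) : Dom v h v.
Proof. by exists 1 => s _; exact: dom_Y2. Qed.
Lemma Dom_add a b (A B : R -> 'M[R]_(a,b)) h v :
  Dom A h v -> Dom B h v -> Dom (fun s => A s + B s) h v.
Proof. by move=> [x HA] [y HB]; exists (x + y) => s Hs; apply: dom_add; auto. Qed.
Lemma Dom_opp a b (A : R -> 'M[R]_(a,b)) h v : Dom A h v -> Dom (fun s => - A s) h v.
Proof. by move=> [x HA]; exists x => s Hs; apply: dom_opp; auto. Qed.
Lemma Dom_scale a b (A : R -> 'M[R]_(a,b)) h v k :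
  Dom A h v -> Dom (fun s => k *: A s) h v.
Proof. by move=> [x HA]; exists (`|k| * x) => s Hs; apply: dom_scale; auto. Qed.
Lemma Dom_mull a b c (L : R -> 'M[R]_(a,b)) (Z : R -> 'M[R]_(b,c)) h v :
  Bd L -> Dom Z h v -> Dom (fun s => L s *m Z s) h v.
Proof. by move=> [x HL] [y HZ]; exists (x * y * b%:R) => s Hs; apply: dom_mull; auto. Qed.
Lemma Dom_mulr a b c (Z : R -> 'M[R]_(a,b)) (L : R -> 'M[R]_(b,c)) h v :
  Bd L -> Dom Z h v -> Dom (fun s => Z s *m L s) h v.
Proof. by move=> [x HL] [y HZ]; exists (x * y * b%:R) => s Hs; apply: dom_mulr; auto. Qed.
Lemma Dom_ext a b (A B : R -> 'M[R]_(a,b)) h v :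
  (forall s, A s = B s) -> Dom B h v -> Dom A h v.
Proof. by move=> E [x HB]; exists x => s Hs; rewrite E; auto. Qed.

End Bounds.

End HC.
Import HC.

Module HD.
Set Implicit Arguments.
Unset Strict Implicit.
Unset Printing Implicit Defensive.
Import numFieldNormedType.Exports.
Local Open Scope ring_scope.
Local Open Scope classical_set_scope.

Section ODE.
Variable R : realType.

Lemma bnd_cont a b (F : R -> 'M[R]_(a,b)) :
  (forall s, derivable F s 1) -> exists x, forall s, 0 <= s <= 1 -> bnd x (F s).
Proof.
move=> dF.
have cF : {within `[0, 1], continuous (fun s => `|F s|)}.
  apply: continuous_subspaceT => s.
  apply: continuous_comp; last exact: norm_continuous.
  exact/differentiable_continuous/derivable1_diffP.
have [c _ Hc] := EVT_max ler01 cF.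
exists `|F c| => s Hs; split => // i j.
have : s \in `[0, 1]%R by rewrite in_itv.
move/Hc; apply: le_trans.
rewrite [leRHS]/Num.Def.normr /= mx_normrE.
by apply: le_trans (le_bigmax _ _ (i, j)).
Qed.

Variables n p : nat.
Notation fi := (@frob_inner R n p).

Lemma ode_zero0 (h v h' v' : R -> 'M[R]_(n,p)) b1 b2 :
  (forall s, MD h s (h' s)) -> (forall s, MD v s (v' s)) ->
  (forall s, 0 <= s <= 1 -> dom b1 (h' s) (h s) (v s) /\ dom b2 (v' s) (h s) (v s)) ->
  h 0 = 0 -> v 0 = 0 -> h 1 = 0.
Proof.
move=> Hh Hv Hd h0 v0.
have [[b10 _] [b20 _]] : dom b1 (h' 0) (h 0) (v 0) /\ dom b2 (v' 0) (h 0) (v 0).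
  by apply: Hd; rewrite lexx ler01.
apply: (gronwall Hh Hv (K := 3 * (b1 + b2) * (n * p)%:R)).
  by rewrite !mulr_ge0 ?addr_ge0.
move=> s Hs; have [D1 D2] := Hd s Hs.
have E1 := fi_dom (h s) D1; have E2 := fi_dom (v s) D2.
have := fi_ge0 (h s); have := fi_ge0 (v s).
set A := fi (h s) (h s); set B := fi (v s) (v s).
set N := (n * p)%:R.
have N0 : 0 <= N by rewrite /N.
move: E1 E2; rewrite -/A -/B => E1 E2 gB gA.
have F1 : b1 * N * (2 * A + A + B) <= b1 * N * (3 * (A + B)).
  by apply: ler_wpM2l; [rewrite mulr_ge0 | lra].
have F2 : b2 * N * (2 * B + A + B) <= b2 * N * (3 * (A + B)).
  by apply: ler_wpM2l; [rewrite mulr_ge0 | lra].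
have -> : 3 * (b1 + b2) * N * (A + B) = b1 * N * (3 * (A + B)) + b2 * N * (3 * (A + B)).
  by rewrite /N; ring.
apply: lerD; [exact: le_trans E1 F1 | exact: le_trans E2 F2].
exact: h0.
exact: v0.
Qed.

Lemma ode_zero (h v h' v' : R -> 'M[R]_(n,p)) :
  (forall s, MD h s (h' s)) -> (forall s, MD v s (v' s)) ->
  Dom h' h v -> Dom v' h v -> h 0 = 0 -> v 0 = 0 -> h 1 = 0.
Proof.
move=> Hh Hv [b1 H1] [b2 H2]; apply: (ode_zero0 (b1 := b1) (b2 := b2) Hh Hv).
by move=> s Hs; split; auto.
Qed.

End ODE.

End HD.
Import HD.

Module HE.
Set Implicit Arguments.
Unset Strict Implicit.
Unset Printing Implicit Defensive.
Import numFieldNormedType.Exports.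
Local Open Scope ring_scope.

Lemma alpha_coef_neq1 (R : realType) (alpha : R) : alpha_coef alpha != 1.
Proof.
rewrite /alpha_coef; have [E|E] := eqVneq (alpha + 1) 0.
  by rewrite E mulr0 invr0 mulr0 eq_sym oner_eq0.
apply/eqP => H.
have E2 : 2 * (alpha + 1) != 0 by rewrite mulf_neq0 // pnatr_eq0.
have : 2 * alpha + 1 = 2 * (alpha + 1) by rewrite -[LHS](divfK E2) H mul1r.
lra.
Qed.

Section Geo.
Variable R : realType.
Variables n p : nat.
Variable alpha : R.
Variable g : R -> 'M[R]_(n,p).
Hypothesis Hg : alpha_geodesic alpha g.
Notation fi := (@frob_inner R n p).
Notation c := (alpha_coef alpha).
Notation g1 := (derive1 g).
Notation g2 := (derive1 (derive1 g)).

Lemma Hst s : (g s)^T *m g s = 1%:M.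
Proof. by case: Hg => H _; exact: H. Qed.

Lemma MDg s : MD g s (g1 s).
Proof. by case: Hg => _ [H _]; exact: derivable_MD. Qed.

Lemma MDg1 s : MD g1 s (g2 s).
Proof. by case: Hg => _ [_ [H _]]; exact: derivable_MD. Qed.

Definition W s := g1 s - c *: (g s *m (g s)^T *m g1 s).
Definition Wd s := g2 s - c *: ((g1 s *m (g s)^T + g s *m (g1 s)^T) *m g1 s
                                 + g s *m (g s)^T *m g2 s).

Lemma MDW s : MD W s (Wd s).
Proof.
apply: MD_sub; first exact: MDg1.
apply: MD_scale; apply: MD_mul (MDg1 s).
exact: MD_mul (MDg s) (MD_tr (MDg s)).
Qed.

Definition Eg s := Wd s + c *: (g1 s *m (g1 s)^T *m g s).

Lemma EL s H : tangent (g s) H -> fi (Eg s) H = 0.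
Proof.
case: Hg => _ [_ [_ H4]] HT; have := H4 s H HT.
by rewrite (MD_derive1 (MDW s)).
Qed.

Lemma O1 s : (1%:M - g s *m (g s)^T) *m Eg s = 0.
Proof.
set G := g s *m (g s)^T; set H := (1%:M - G) *m Eg s.
have HT : tangent (g s) H.
  rewrite /tangent /H mulmxA mulmxBr mulmx1 /G mulmxA Hst mul1mx subrr mul0mx.
  by rewrite /skew_mat trmx0 oppr0.
apply: fi_eq0; rewrite -[X in fi X _ = _]/H -(EL HT) /frob_inner.
congr (\tr _); rewrite /H trmx_mul mulmxA [RHS]mulmxA; congr (_ *m _).
rewrite -mulmxA; congr (_ *m _).
have GT : G^T = G by rewrite /G trmx_mul trmxK.
have GG : G *m G = G by rewrite /G mulmxA -[g s *m _ *m g s]mulmxA Hst mulmx1.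
by rewrite trB trmx1 GT mulmxBl mul1mx mulmxBr mulmx1 GG subrr subr0.
Qed.

Lemma O2 s : ((g s)^T *m Eg s)^T = (g s)^T *m Eg s.
Proof.
set B := (g s)^T *m Eg s; set K := B - B^T.
have KT : K^T = - K by rewrite /K trB trmxK opprB.
have HT : tangent (g s) (g s *m K) by rewrite /tangent mulmxA Hst mul1mx /skew_mat.
have H0 := EL HT.
have H1 : \tr (B^T *m K) = 0.
  by rewrite -H0 /frob_inner /B trmx_mul trmxK !mulmxA.
have H2 : @frob_inner R p p K K = 0.
  rewrite /frob_inner {1}/K trB trmxK mulmxBl raddfB /= H1 sub0r.
  rewrite -mxtrace_tr trmx_mul KT mulNmx raddfN /= opprK mxtrace_mulC.
  rewrite -/K. exact: H1.
have := fi_eq0 H2; move/eqP; rewrite subr_eq0 => /eqP.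
by move=> E; rewrite -E.
Qed.

Lemma C1 s : (g1 s)^T *m g s + (g s)^T *m g1 s = 0.
Proof. exact: MD_const0 Hst (MD_mul (MD_tr (MDg s)) (MDg s)). Qed.

Definition Om s := (g s)^T *m g1 s.
Definition Y s := (g1 s)^T *m g1 s.
Definition X s := (g s)^T *m g2 s.

Lemma C1' s : (g1 s)^T *m g s = - Om s.
Proof. by apply/eqP; rewrite -subr_eq0 opprK C1. Qed.

Lemma OmT s : (Om s)^T = - Om s.
Proof. by rewrite /Om trmx_mul trmxK C1'. Qed.

Lemma C2 s : (X s)^T + Y s + (Y s + X s) = 0.
Proof.
have H := MD_add (MD_mul (MD_tr (MDg1 s)) (MDg s)) (MD_mul (MD_tr (MDg s)) (MDg1 s)).
have := MD_const0 C1 H.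
by rewrite /X /Y trmx_mul trmxK.
Qed.

Lemma gT_E s : (g s)^T *m Eg s = (1 - c) *: X s - (2 * c) *: (Om s *m Om s) - c *: Y s.
Proof.
have e1 : (g s)^T *m (g1 s *m (g s)^T *m g1 s) = Om s *m Om s by rewrite /Om !mulmxA.
have e2 : (g s)^T *m (g s *m (g1 s)^T *m g1 s) = Y s by rewrite !mulmxA Hst mul1mx.
have e3 : (g s)^T *m (g s *m (g s)^T *m g2 s) = X s by rewrite !mulmxA Hst mul1mx.
have e4 : (g s)^T *m (g1 s *m (g1 s)^T *m g s) = - (Om s *m Om s).
  have -> : (g s)^T *m (g1 s *m (g1 s)^T *m g s) = Om s *m ((g1 s)^T *m g s).
    by rewrite /Om !mulmxA.
  by rewrite C1' mulmxN.
rewrite /Eg /Wd mulmxDr mulmxBr -!scalemxAr mulmxDr !mulmxDl mulmxDr.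
rewrite e1 e2 e3 e4 -/(X s).
apply/matrixP => i j; rewrite !mxE; ring.
Qed.

Lemma c1_neq0 : 1 - c != 0.
Proof. by rewrite subr_eq0 eq_sym alpha_coef_neq1. Qed.

Lemma OOT s : (Om s *m Om s)^T = Om s *m Om s.
Proof. by rewrite trmx_mul OmT mulmxN mulNmx opprK. Qed.

Lemma YT s : (Y s)^T = Y s.
Proof. by rewrite /Y trmx_mul trmxK. Qed.

Lemma Xsym s : (X s)^T = X s.
Proof.
have H := O2 s; rewrite gT_E !trB !trZ OOT YT in H.
apply/matrixP => i j; move/matrixP: H => /(_ i j); rewrite !mxE => H.
apply: (mulfI c1_neq0); lra.
Qed.

Lemma Xval s : X s = - Y s.
Proof.
have H := C2 s; rewrite Xsym in H.
apply/matrixP => i j; move/matrixP: H => /(_ i j); rewrite !mxE => H; lra.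
Qed.

Lemma Bval s : (g s)^T *m Eg s = - Y s - (2 * c) *: (Om s *m Om s).
Proof. rewrite gT_E Xval; apply/matrixP => i j; rewrite !mxE; ring. Qed.

Lemma Wd_val s : Wd s = - (g s *m Y s) - (2 * c) *: (g s *m (Om s *m Om s))
                         + c *: (g1 s *m Om s).
Proof.
have EE : Eg s = g s *m ((g s)^T *m Eg s).
  by move: (O1 s); rewrite mulmxBl mul1mx => /eqP; rewrite subr_eq0 -mulmxA => /eqP.
have -> : Wd s = Eg s - c *: (g1 s *m (g1 s)^T *m g s) by rewrite /Eg addrK.
rewrite EE Bval -mulmxA C1' mulmxBr mulmxN -scalemxAr mulmxN scalerN.
apply/matrixP => i j; rewrite !mxE; ring.
Qed.

Lemma g1_val s : g1 s = W s + (c / (1 - c)) *: (g s *m ((g s)^T *m W s)).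
Proof.
have H : (g s)^T *m W s = (1 - c) *: Om s.
  rewrite /W mulmxBr -scalemxAr !mulmxA Hst mul1mx -/(Om s).
  by rewrite scalerBl scale1r.
rewrite H -scalemxAr scalerA divfK ?c1_neq0 // /W mulmxA.
by rewrite /Om subrK.
Qed.

Lemma Bdg : Bd g.
Proof. exact: bnd_cont (fun s => MD_derivable (MDg s)). Qed.
Lemma Bdg1 : Bd g1.
Proof. exact: bnd_cont (fun s => MD_derivable (MDg1 s)). Qed.
Lemma BdgT : Bd (fun s => (g s)^T).
Proof. exact: Bd_tr Bdg. Qed.
Lemma BdW : Bd W.
Proof.
apply: (@Bd_ext _ _ _ (fun s => g1 s + - (c *: (g s *m (g s)^T *m g1 s)))) => //.
apply: Bd_add; first exact: Bdg1.
apply/Bd_opp/Bd_scale/Bd_mul; last exact: Bdg1.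
exact: Bd_mul Bdg BdgT.
Qed.
Lemma BdOm : Bd Om.
Proof. exact: Bd_mul BdgT Bdg1. Qed.
Lemma BdY : Bd Y.
Proof. exact: Bd_mul (Bd_tr Bdg1) Bdg1. Qed.
Lemma BdOO : Bd (fun s => Om s *m Om s).
Proof. exact: Bd_mul BdOm BdOm. Qed.
Lemma BdgTW : Bd (fun s => (g s)^T *m W s).
Proof. exact: Bd_mul BdgT BdW. Qed.

Lemma geo_P (P : 'M[R]_n) : P *m g 0 = 0 -> P *m g1 0 = 0 -> P *m g 1 = 0.
Proof.
move=> P0 P1.
pose k := c / (1 - c).
have Dh' : Dom (fun s => P *m g1 s) (fun s => P *m g s) (fun s => P *m W s).
  apply: (Dom_ext (B := fun s => P *m W s + k *: ((P *m g s) *m ((g s)^T *m W s)))).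
    by move=> s; rewrite {1}g1_val mulmxDr -scalemxAr !mulmxA.
  apply: Dom_add; first exact: Dom_Y2.
  by apply/Dom_scale/Dom_mulr; [exact: BdgTW | exact: Dom_Y1].
apply: (ode_zero (h := fun s => P *m g s) (v := fun s => P *m W s) (h' := fun s => P *m g1 s) (v' := fun s => P *m Wd s)).
- by move=> s; apply: MD_mull; exact: MDg.
- by move=> s; apply: MD_mull; exact: MDW.
- exact: Dh'.
- apply: (Dom_ext (B := fun s => - ((P *m g s) *m Y s) + - ((2 * c) *: ((P *m g s) *m (Om s *m Om s)))
                        + c *: ((P *m g1 s) *m Om s))).
    move=> s; rewrite Wd_val !mulmxDr !mulmxN -!scalemxAr !mulmxA.
    done.
  apply: Dom_add; [apply: Dom_add|].
  + by apply/Dom_opp/Dom_mulr; [exact: BdY | exact: Dom_Y1].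
  + by apply/Dom_opp/Dom_scale/Dom_mulr; [exact: BdOO | exact: Dom_Y1].
  + by apply/Dom_scale/Dom_mulr; [exact: BdOm | exact: Dh'].
- exact: P0.
- by rewrite /W mulmxBr P1 -scalemxAr !mulmxA P0 !mul0mx scaler0 subr0.
Qed.

Lemma geo_U0 (U : 'M[R]_(n,p)) : g 0 = U -> g1 0 = 0 -> g 1 = U.
Proof.
move=> G0 G1.
pose k := c / (1 - c).
have Dg1 : Dom g1 (fun s => g s - U) W.
  apply: (Dom_ext (B := fun s => W s + k *: ((g s *m (g s)^T) *m W s))).
    by move=> s; rewrite {1}g1_val mulmxA.
  apply: Dom_add; first exact: Dom_Y2.
  by apply/Dom_scale/Dom_mull; [exact: Bd_mul Bdg BdgT | exact: Dom_Y2].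
apply/eqP; rewrite -subr_eq0; apply/eqP.
apply: (ode_zero (h := fun s => g s - U) (v := W) (h' := fun s => g1 s - 0) (v' := Wd)).
- by move=> s; apply: MD_sub; [exact: MDg | exact: MD_cst].
- exact: MDW.
- by apply: (Dom_ext (B := g1)) => // s; rewrite subr0.
- apply: (Dom_ext (B := fun s => - ((g s *m (g1 s)^T) *m g1 s)
                        + - ((2 * c) *: ((g s *m (g s)^T) *m (g1 s *m Om s)))
                        + c *: (g1 s *m Om s))).
    move=> s; rewrite Wd_val /Y /Om !mulmxA.
    done.
  apply: Dom_add; [apply: Dom_add|].
  + by apply/Dom_opp/Dom_mull; [exact: Bd_mul Bdg (Bd_tr Bdg1) | exact: Dg1].
  + apply/Dom_opp/Dom_scale/Dom_mull; first exact: Bd_mul Bdg BdgT.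
    by apply: Dom_mulr; [exact: BdOm | exact: Dg1].
  + by apply/Dom_scale/Dom_mulr; [exact: BdOm | exact: Dg1].
- by rewrite G0 subrr.
- by rewrite /W G1 mulmx0 scaler0 subr0.
Qed.

End Geo.

End HE.
Import HE.

Module HF.
Set Implicit Arguments.
Unset Strict Implicit.
Unset Printing Implicit Defensive.
Import numFieldNormedType.Exports.
Local Open Scope ring_scope.

Section Main.
Variable R : realType.
Variables n p : nat.
Variables U Ut : 'M[R]_(n,p).
Hypothesis HU : stiefel U.

Definition V0 := (1%:M - U *m U^T) *m Ut.
Definition inS (X : 'M[R]_(n,p)) := exists B M : 'M[R]_p, X = U *m B + V0 *m M.
Definition tang (X : 'M[R]_(n,p)) :=
  exists A M : 'M[R]_p, skew_mat A /\ X = U *m A + V0 *m M.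

Lemma UTV0 : U^T *m V0 = 0.
Proof. by rewrite /V0 mulmxA mulmxBr mulmx1 mulmxA HU mul1mx subrr mul0mx. Qed.

Definition Pm : 'M[R]_n := (cokermx (row_mx U V0)^T)^T.

Lemma inS_P X : inS X -> Pm *m X = 0.
Proof.
move=> [B [M ->]]; apply: trmx_inj; rewrite trmx_mul trmxK trmx0.
apply/eqP; rewrite -submxE; apply/submxP.
exists (row_mx B^T M^T); rewrite tr_row_mx mul_row_col.
by rewrite trD !trmx_mul.
Qed.

Lemma P_inS X : Pm *m X = 0 -> inS X.
Proof.
move=> H; have : (X^T <= (row_mx U V0)^T)%MS.
  by rewrite submxE; apply/eqP; apply: trmx_inj; rewrite trmx_mul trmxK trmx0.
case/submxP => D ED; exists (usubmx D^T), (dsubmx D^T).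
rewrite -mul_row_col -[X]trmxK ED trmx_mul trmxK.
by rewrite -{1}[D^T]vsubmxK.
Qed.

Lemma inS_add X Y : inS X -> inS Y -> inS (X + Y).
Proof.
move=> [B1 [M1 ->]] [B2 [M2 ->]]; exists (B1 + B2), (M1 + M2).
by rewrite !mulmxDr addrACA.
Qed.
Lemma inS_scale k X : inS X -> inS (k *: X).
Proof.
move=> [B [M ->]]; exists (k *: B), (k *: M).
by rewrite scalerDr -!scalemxAr.
Qed.
Lemma inS_opp X : inS X -> inS (- X).
Proof. by move=> H; rewrite -scaleN1r; apply: inS_scale. Qed.
Lemma inS_sub X Y : inS X -> inS Y -> inS (X - Y).
Proof. by move=> H1 H2; apply: inS_add H1 (inS_opp H2). Qed.
Lemma inS_U : inS U.
Proof. by exists 1%:M, 0; rewrite mulmx1 mulmx0 addr0. Qed.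
Lemma inS_Ut : inS Ut.
Proof.
exists (U^T *m Ut), 1%:M; rewrite mulmx1 /V0 mulmxBl mul1mx mulmxA.
by rewrite addrC subrK.
Qed.
Lemma inS_0 : inS 0.
Proof. by exists 0, 0; rewrite !mulmx0 addr0. Qed.
Lemma inS_mulr X (S : 'M[R]_p) : inS X -> inS (X *m S).
Proof.
move=> [B [M ->]]; exists (B *m S), (M *m S).
by rewrite mulmxDl !mulmxA.
Qed.

Lemma proj_inS Y W : inS Y -> inS W -> inS (proj_tan Y W).
Proof. by move=> HY HW; rewrite /proj_tan; apply: inS_sub HW (inS_mulr _ HY). Qed.

Lemma rp_inS gam Y W : inS Y -> inS W -> inS (rescaled_proj gam Y W).
Proof. by move=> HY HW; apply/inS_scale/proj_inS. Qed.

Lemma backward_inS gam (Us : nat -> 'M[R]_(n,p)) k D :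
  (forall j, inS (Us j)) -> inS D -> inS (backward gam Us k D).
Proof.
move=> HUs; elim: k D => [|k IH] D HD //=.
by apply: IH; apply: rp_inS.
Qed.

Lemma tang_inS X : tang X -> inS X.
Proof. by move=> [A [M [_ E]]]; exists A, M. Qed.

Lemma tang_sub X Y : tang X -> tang Y -> tang (X - Y).
Proof.
move=> [A1 [M1 [S1 ->]]] [A2 [M2 [S2 ->]]]; exists (A1 - A2), (M1 - M2); split.
  by rewrite /skew_mat trB S1 S2 opprB addrC; apply/matrixP => i j; rewrite !mxE; ring.
by rewrite !mulmxBr opprD addrACA.
Qed.

Lemma rpU_tang gam W : inS W -> tang (rescaled_proj gam U W).
Proof.
move=> [B [M EW]].
have UW : U^T *m W = B.
  by rewrite EW mulmxDr [U^T *m (V0 *m M)]mulmxA UTV0 mul0mx addr0 mulmxA HU mul1mx.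
rewrite /rescaled_proj /proj_tan UW.
set k := (gam / _).
exists (k *: (B - symm B)), (k *: M); split.
  rewrite /skew_mat /symm; apply/matrixP => i j; rewrite !mxE; field.
  done.
rewrite {1}EW -!scalemxAr -scalerDr; congr (_ *: _).
by rewrite mulmxBr /symm -scalemxAr addrAC.
Qed.

Lemma backward_tang gam (Us : nat -> 'M[R]_(n,p)) k D :
  (forall j, inS (Us j)) -> Us 0%N = U -> inS D -> tang (backward gam Us k.+1 D).
Proof.
move=> HUs U0; elim: k D => [|k IH] D HD.
  by rewrite /= U0; apply: rpU_tang.
by rewrite [backward _ _ _ _]/=; apply: IH; apply: rp_inS.
Qed.

Lemma dcst a b (C : 'M[R]_(a,b)) : derive1 (fun _ : R => C) = fun _ => 0.
Proof. by apply/funext => s; exact: MD_derive1 (MD_cst C s). Qed.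

Lemma const_geo alpha : alpha_geodesic alpha (fun _ : R => U).
Proof.
split; first by move=> _; exact: HU.
split; first by move=> t; exact: MD_derivable (MD_cst U t).
split; first by move=> t; rewrite dcst; exact: MD_derivable (MD_cst 0 t).
move=> t H _; rewrite dcst /=.
under eq_fun do rewrite mulmx0 scaler0 subr0.
by rewrite dcst mul0mx mul0mx scaler0 addr0 /frob_inner trmx0 mul0mx mxtrace0.
Qed.

Lemma Exp_inS alpha D : inS D -> inS (alpha_Exp alpha U D).
Proof.
move=> HD; rewrite /alpha_Exp; case: xgetP => [g _ [Hg [g0 d0]] | _]; last exact: inS_0.
apply: P_inS; apply: (geo_P Hg).
  by rewrite g0; exact: inS_P inS_U.
by rewrite d0; exact: inS_P HD.
Qed.

Lemma Exp0 alpha : alpha_Exp alpha U 0 = U.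
Proof.
rewrite /alpha_Exp; case: xgetP => [g _ [Hg [g0 d0]] | NP].
  by have := geo_U0 Hg g0; move=> HH; apply: HH; exact: d0.
exfalso; apply: (NP (fun _ => U)); split; first exact: const_geo.
by split => //; rewrite dcst.
Qed.

End Main.

End HF.
Import HF.

Unset Implicit Arguments.
Set Strict Implicit.

Theorem proposition3p5 (R : realType) (n p : nat) (alpha : R)
    (U Ut Q : 'M[R]_(n, p)) (Nh : 'M[R]_p) (eps : R) (m : nat) (t : nat -> R) :
  (p <= n)%N ->
  alpha != -1 ->
  stiefel U -> stiefel Ut ->
  (* compact QR-decomposition Q Nh = (I_n - U U^T) Ut *)
  stiefel Q ->
  (forall i j : 'I_p, (j < i)%N -> Nh i j = 0) ->
  Q *m Nh = (1%:M - U *m U^T) *m Ut ->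
  0 < eps ->
  t 0%N = 0 -> t m = 1 -> (forall j, (j < m)%N -> t j < t j.+1) ->
  forall k : nat,
    (forall i, (i < k)%N -> eps < (shooting_state alpha U Ut m t i).2) ->
    (exists (A Rm : 'M[R]_p), skew_mat A /\
        (shooting_state alpha U Ut m t k).1 = U *m A + Q *m Rm) /\
    (eps < (shooting_state alpha U Ut m t k).2 ->
     exists (As Rs : 'M[R]_p), skew_mat As /\
        (shooting_body alpha U Ut m t (shooting_state alpha U Ut m t k).1).1.1
          = U *m As + Q *m Rs).
Proof.
move=> _ _ HU _ _ _ HQN _ t0 _ _ k _.
have conv : forall X, tang U Ut X ->
    exists A Rm : 'M[R]_p, skew_mat A /\ X = U *m A + Q *m Rm.
  move=> X [A [M [SA EX]]]; exists A, (Nh *m M); split => //.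
  by rewrite EX mulmxA HQN.
have body : forall D, tang U Ut D -> tang U Ut (shooting_body alpha U Ut m t D).1.1.
  move=> D HD; rewrite /shooting_body /=.
  apply: backward_tang => //.
  - move=> j; apply: Exp_inS => //; apply: inS_scale; exact: tang_inS HD.
  - by rewrite t0 scale0r Exp0.
  - apply: inS_sub; last exact: inS_Ut.
    apply: Exp_inS => //; apply: inS_scale; exact: tang_inS HD.
have state : forall k, tang U Ut (shooting_state alpha U Ut m t k).1.
  elim => [|k' IH] /=; first by apply: rpU_tang => //; exact: inS_Ut.
  exact: tang_sub IH (body _ IH).
split; first exact: conv (state k).
by move=> _; exact: conv (body _ (state k)).
Qed.
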